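(* Let $M\in\mathrm{M}_n(\mathbb{K})$ be a cyclic matrix with minimal polynomial $f=f_1^{m_1}\cdots f_s^{m_s}$, where $f_1,\dots,f_s\in\mathbb{K}[x]$ are pairwise distinct monic irreducible polynomials and $m_i\ge1$. Let $\mathcal{C}\subseteq\mathbb{L}^n$ be an $M$-cyclic code of dimension $k$ with generator polynomial $g=g_1\cdots g_s$, $g_i\mid f_i^{m_i}$ in $\mathbb{L}[x]$. Define $\ell_i=0$ if $g_i=1$ and $\ell_i=\min\{\ell\in\{1,\dots,m_i\}:g_i\mid f_i^{\ell}\}$ otherwise; and $\ell'_i=0$ if $g_i=f_i^{m_i}$ and $\ell'_i=\min\{\ell'\in\{1,\dots,m_i\}: f_i^{m_i-\ell'}\mid g_i\}$ otherwise. Then, if $k\ge1$, $$M_k(\mathcal{C})=\sum_{i=1}^s\ell'_i\deg f_i=\sum_{1\le i\le s,\ g_i\neq f_i^{m_i}}\ell'_i\deg f_i,$$ and, if $k\le n-1$, $$M_{n-k}(\mathcal{C}^\perp)=\sum_{i=1}^s\ell_i\deg f_i=\sum_{1\le i\le s,\ \gcd(g,f_i)\neq1}\ell_i\deg f_i.$$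
   Context: Let $\mathbb{L}/\mathbb{K}$ be a field extension of finite degree $m\ge n$. Vectors are row vectors; $\mathcal{C}^\perp=\{c'\in\mathbb{L}^n:\sum_jc'_jc_j=0\ \forall c\in\mathcal{C}\}$. For $c=(c_1,\dots,c_n)\in\mathbb{L}^n$, $\mathrm{Rsupp}(c)\subseteq\mathbb{K}^n$ is the $\mathbb{K}$-row space of the $m\times n$ matrix over $\mathbb{K}$ whose $j$-th column is the coordinate vector of $c_j$ in a fixed $\mathbb{K}$-basis of $\mathbb{L}$; for an $\mathbb{L}$-subspace $\mathcal{D}$, $\mathrm{wt}_R(\mathcal{D})$ is the $\mathbb{K}$-dimension of the span of all $\mathrm{Rsupp}(d)$, $d\in\mathcal{D}$. For a $k$-dimensional $\mathbb{L}$-subspace $\mathcal{C}$ and $1\le r\le k$, $M_r(\mathcal{C})=\min\{\mathrm{wt}_R(\mathcal{D}):\mathcal{D}\subseteq\mathcal{C},\dim_{\mathbb{L}}\mathcal{D}=r\}$. A matrix $M\in\mathrm{M}_n(\mathbb{K})$ is cyclic if there is $v\in\mathbb{K}^n$ (a cyclic vector) with $(v,vM^t,\dots,v(M^t)^{n-1})$ a basis; equivalently its minimal polynomial $f$ has degree $n$. An $M$-cyclic code is an $\mathbb{L}$-subspace $\mathcal{C}\subseteq\mathbb{L}^n$ with $cM^t\in\mathcal{C}$ for all $c\in\mathcal{C}$; each equals $\mathcal{C}_g=\{v\,g(M)^tP(M)^t:P\in\mathbb{L}[x]\}$ for a unique monic divisor $g$ of $f$ in $\mathbb{L}[x]$ (its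 generator polynomial), and $\dim\mathcal{C}_g=n-\deg g$. *)

(* Defs.v *)
From HB Require Import structures.
From mathcomp Require Import all_boot all_order all_algebra all_field.
From mathcomp Require Import boolp.
Set Implicit Arguments. Unset Strict Implicit. Unset Printing Implicit Defensive.
Import Order.TTheory GRing.Theory.
Local Open Scope ring_scope.

(* Vectors of L^n are row vectors 'rV[L]_n ; L-subspaces of L^n are represented
   (mxalgebra style) by the row space of a matrix 'M[L]_n ; dimension = \rank. *)

Section Defs.
Variables (K : fieldType) (L : fieldExtType K).

Definition coordmx n (c : 'rV[L]_n) : 'M[K]_(\dim {:L}, n) :=
  \matrix_(i < \dim {:L}, j < n) coord (vbasis {:L}) i (c 0 j).

(* Rsupp(c) : its K-row space (as an mxalgebra subspace of K^n) *)
Definition Rsupp n (c : 'rV[L]_n) : 'M[K]_(\dim {:L}, n) := coordmx c.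

(* wt_R(D) : K-dimension of the span of all Rsupp(d), d in D (= row space of D).
   The span is the smallest K-subspace containing every Rsupp(d); its dimension is
   the least rank of a K-subspace W containing all of them. *)
Definition wtR_pred n (D : 'M[L]_n) (w : nat) : bool :=
  `[< exists W : 'M[K]_n, \rank W = w /\
        forall d : 'rV[L]_n, (d <= D)%MS -> (Rsupp d <= W)%MS >].

Lemma wtR_ex n (D : 'M[L]_n) : exists w, wtR_pred D w.
Proof.
exists n; apply/asboolP; exists 1%:M; split; first by rewrite mxrank1.
by move=> d _; exact: submx1.
Qed.

Definition wtR n (D : 'M[L]_n) : nat := ex_minn (wtR_ex D).

Definition Mr_pred n (C : 'M[L]_n) (r : nat) (w : nat) : bool :=
  `[< exists D : 'M[L]_n, [/\ (D <= C)%MS, \rank D = r & wtR D = w] >].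

Definition Mr n (C : 'M[L]_n) (r : nat) : nat :=
  match pselect (exists w, Mr_pred C r w) with
  | left H => ex_minn H
  | right _ => 0%N
  end.

Definition dualC n (C : 'M[L]_n) : 'M[L]_n := kermx C^T.

Definition cyclic_mx n (M : 'M[K]_n) : Prop :=
  exists v : 'rV[K]_n, row_free (\matrix_(i < n) (v *m (M^T) ^+ i)).

(* the least element of {1,...,m} satisfying P (0 if there is none) *)
Definition min_in_1m (P : pred nat) (m : nat) : nat :=
  head 0%N [seq l <- iota 1 m | P l].

Definition polyL (p : {poly K}) : {poly L} := map_poly (in_alg L) p.
Definition mxL n (M : 'M[K]_n) : 'M[L]_n := map_mx (in_alg L) M.

Definition ell (gi : {poly L}) (fi : {poly K}) (mi : nat) : nat :=
  if gi == 1 then 0%N else min_in_1m (fun l => gi %| polyL fi ^+ l) mi.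
Definition ell' (gi : {poly L}) (fi : {poly K}) (mi : nat) : nat :=
  if gi == polyL fi ^+ mi then 0%N
  else min_in_1m (fun l => polyL fi ^+ (mi - l) %| gi) mi.

End Defs.

(* Main.v *)
Require Import Defs.
From HB Require Import structures.
From mathcomp Require Import all_boot all_order all_algebra all_field.
From mathcomp Require Import zify boolp.
Import Order.TTheory GRing.Theory.
Local Open Scope ring_scope.

Lemma horner_mx_expand (F : comNzRingType) n (A : 'M[F]_n.+1) p :
  horner_mx A p = \sum_(i < size p) p`_i *: A ^+ i.
Proof.
rewrite -{1}[p]coefK poly_def rmorph_sum; apply: eq_bigr => i _.
rewrite -mul_polyC rmorphM /= horner_mx_C rmorphXn /= horner_mx_X.
by rewrite -scalemx1 -scalerAl mul1r.
Qed.

Lemma trmx_exp (F : comNzRingType) n (A : 'M[F]_n.+1) i : (A ^+ i)^T = A^T ^+ i.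
Proof.
elim: i => [|i IH]; first by rewrite !expr0 trmx1.
by rewrite exprSr exprS -IH -mulmxE trmx_mul mulmxE.
Qed.

Lemma horner_trmx (F : comNzRingType) n (A : 'M[F]_n.+1) p :
  (horner_mx A p)^T = horner_mx A^T p.
Proof.
rewrite !horner_mx_expand linear_sum; apply: eq_bigr => i _.
by rewrite linearZ /= trmx_exp.
Qed.

Section Cyc.
Variables (F : fieldType) (n : nat) (B : 'M[F]_n.+1) (v : 'rV[F]_n.+1).
Hypothesis cycB : row_free (\matrix_(i < n.+1) (v *m B ^+ i)).
Let Kry := \matrix_(i < n.+1) (v *m B ^+ i).

Lemma hornerv_wide d (Q : {poly F}) : (size Q <= d)%N ->
  v *m horner_mx B Q = \sum_(i < d) Q`_i *: (v *m B ^+ i).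
Proof.
move=> sQ; rewrite horner_mx_expand mulmx_sumr.
rewrite (big_ord_widen d (fun i => v *m (Q`_i *: B ^+ i)) sQ) big_mkcond /=.
apply: eq_bigr => i _; case: ltnP => h; first by rewrite scalemxAr.
by rewrite nth_default // scale0r.
Qed.

Lemma krylov_mulE (u : 'rV_n.+1) : u *m Kry = v *m horner_mx B (rVpoly u).
Proof.
rewrite (hornerv_wide n.+1); last by rewrite size_poly.
rewrite mulmx_sum_row; apply: eq_bigr => i _.
by rewrite rowK coef_rVpoly_ord.
Qed.

Lemma kry_unit : Kry \in unitmx.
Proof. by rewrite -row_free_unit. Qed.

Lemma cyc_inj (Q : {poly F}) : (size Q <= n.+1)%N -> v *m horner_mx B Q = 0 -> Q = 0.
Proof.
move=> sQ h; have : poly_rV Q *m Kry = 0 by rewrite krylov_mulE poly_rV_K.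
move/(congr1 (mulmx^~ (invmx Kry))); rewrite mulmxK ?kry_unit // mul0mx.
by move/(congr1 rVpoly); rewrite poly_rV_K // linear0.
Qed.

Lemma cyc_surj (x : 'rV[F]_n.+1) : exists2 Q : {poly F}, (size Q <= n.+1)%N & x = v *m horner_mx B Q.
Proof.
exists (rVpoly (x *m invmx Kry)); first by rewrite size_poly.
by rewrite -krylov_mulE mulmxKV ?kry_unit.
Qed.

Lemma rank_horner_lb (h : {poly F}) : h != 0 -> (size h <= n.+2)%N ->
  (n.+2 - size h <= \rank (horner_mx B h))%N.
Proof.
move=> hnz sh; set r := (n.+2 - size h)%N.
set Z := \matrix_(i < r) (v *m B ^+ i *m horner_mx B h).
have ZE (u : 'rV_r) : u *m Z = v *m horner_mx B (rVpoly u * h).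
  rewrite rmorphM /= mulmxA (hornerv_wide r) ?size_poly //.
  rewrite mulmx_sum_row mulmx_suml; apply: eq_bigr => i _.
  by rewrite rowK coef_rVpoly_ord scalemxAl.
have rfZ : row_free Z.
  rewrite -kermx_eq0; apply/eqP/row_matrixP => i; rewrite row0.
  have : row i (kermx Z) *m Z = 0 by rewrite -row_mul mulmx_ker row0.
  have hs : (size (rVpoly (row i (kermx Z)) * h)%R <= n.+1)%N.
    set u := row i (kermx Z).
    have s2 := size_mul_leq (rVpoly u) h.
    have s1 : (size (rVpoly u) <= r)%N by rewrite size_poly.
    apply: leq_trans s2 _.
    have hs : (0 < size h)%N by rewrite size_poly_gt0.
    move: s1; rewrite /r; move: (size (rVpoly u)) => a; lia.
  rewrite ZE => /(cyc_inj _ hs) /eqP; rewrite mulf_eq0 (negbTE hnz) orbF => /eqP h0.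
  by rewrite -[row i _]rVpolyK h0 linear0.
have : (Z <= horner_mx B h)%MS.
  by apply/row_subP => i; rewrite rowK submxMl.
move/mxrankS; move: rfZ => /eqP ->; done.
Qed.

Lemma rank_horner (phi h : {poly F}) : horner_mx B phi = 0 -> size phi = n.+2 ->
  h %| phi -> \rank (horner_mx B h) = (n.+2 - size h)%N.
Proof.
move=> hphi sphi hdvd.
have phinz : phi != 0 by rewrite -size_poly_gt0 sphi.
set h' := phi %/ h.
have ephi : phi = h' * h by rewrite divpK.
have hnz : h != 0 by apply: contraNneq phinz => h0; rewrite ephi h0 mulr0.
have h'nz : h' != 0 by apply: contraNneq phinz => h0; rewrite ephi h0 mul0r.
have ss : (size h' + size h)%N = n.+3.
  have := size_mul h'nz hnz; rewrite -ephi sphi.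
  have := size_poly_gt0 h; rewrite hnz => /= a1.
  have := size_poly_gt0 h'; rewrite h'nz => /= a2.
  move: a1 a2; move: (size h) (size h') => x y; lia.
have lb1 := rank_horner_lb _ hnz.
have lb2 := rank_horner_lb _ h'nz.
have hk : (horner_mx B h' <= kermx (horner_mx B h))%MS.
  by apply/sub_kermxP; rewrite mulmxE -rmorphM /= -ephi hphi.
have := mxrankS hk; rewrite mxrank_ker => hk2.
have := size_poly_gt0 h; rewrite hnz => /= a1.
have := size_poly_gt0 h'; rewrite h'nz => /= a2.
have sh1 : (size h <= n.+2)%N by move: ss a2; move: (size h) (size h') => x y; lia.
have sh2 : (size h' <= n.+2)%N by move: ss a1; move: (size h) (size h') => x y; lia.
have l1 := lb1 sh1. have l2 := lb2 sh2.
apply/eqP; rewrite eqn_leq l1 andbT.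
have rl := rank_leq_row (horner_mx B h).
move: l2 hk2 ss rl; move: (\rank (horner_mx B h)) (\rank (horner_mx B h')) (size h) (size h') => x y z w.
lia.
Qed.

Lemma cyc_mem_dvd (phi g Q : {poly F}) : horner_mx B phi = 0 -> size phi = n.+2 ->
  g %| phi -> (v *m horner_mx B Q <= horner_mx B g)%MS -> g %| Q.
Proof.
move=> hphi sphi gdvd /submxP [w hw].
have [P _ hP] := cyc_surj w.
have phinz : phi != 0 by rewrite -size_poly_gt0 sphi.
have e0 : v *m horner_mx B (Q - P * g) = 0.
  by rewrite rmorphB /= mulmxBr hw hP rmorphM /= -mulmxE mulmxA subrr.
set R := (Q - P * g) %% phi.
have eR : v *m horner_mx B R = 0.
  have := e0; rewrite [X in horner_mx B X](divp_eq _ phi) rmorphD rmorphM /= hphi.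
  by rewrite mulr0 add0r.
have sR : (size R <= n.+1)%N.
  by have := ltn_modp (Q - P * g) phi; rewrite phinz sphi.
have R0 := cyc_inj _ sR eR.
have : phi %| Q - P * g by rewrite /dvdp -/R R0.
move/(dvdp_trans gdvd) => h1.
have h2 : g %| P * g by apply: dvdp_mull.
by have := dvdp_add h1 h2; rewrite subrK.
Qed.

End Cyc.

Section Perp.
Variables (F : fieldType).

Lemma perpS m1 m2 N (X : 'M[F]_(m1, N)) (Y : 'M[F]_(m2, N)) :
  (X <= Y)%MS -> (kermx Y^T <= kermx X^T)%MS.
Proof.
case/submxP => Z ->; apply/sub_kermxP.
by rewrite trmx_mul mulmxA mulmx_ker mul0mx.
Qed.

Lemma perpK m N (X : 'M[F]_(m, N)) : (kermx (kermx X^T)^T <= X)%MS.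
Proof.
have s : (X <= kermx (kermx X^T)^T)%MS.
  by apply/sub_kermxP; rewrite -(trmxK (X *m _)) trmx_mul trmxK mulmx_ker trmx0.
rewrite -(mxrank_leqif_sup s).2 !mxrank_ker mxrank_tr mxrank_ker mxrank_tr.
have := rank_leq_col X; move: (\rank X) => r hr.
apply/eqP; lia.
Qed.

End Perp.


Section Coord.
Variables (K : fieldType) (L : fieldExtType K).
Local Notation D := (\dim {:L}).
Local Notation b := (vbasis {:L}).
Local Notation mxL := (map_mx (in_alg L)).
Local Notation polyL := (polyL L).

Lemma mxL_mul m p q (A : 'M[K]_(m, p)) (B : 'M[K]_(p, q)) :
  mxL (A *m B) = mxL A *m mxL B.
Proof. exact: map_mxM. Qed.

Lemma mxL_exp p (A : 'M[K]_p.+1) i : mxL (A ^+ i) = mxL A ^+ i.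
Proof.
elim: i => [|i IH]; first by rewrite !expr0 map_mx1.
by rewrite !exprS -!mulmxE mxL_mul IH.
Qed.

Lemma coordmx_mulL p N (X : 'M[K]_(p, N)) (u : 'rV[L]_p) :
  coordmx (u *m mxL X) = coordmx u *m X.
Proof.
apply/matrixP => i j; rewrite !mxE linear_sum; apply: eq_bigr => r _.
by rewrite !mxE /= mulr_algr linearZ /= mulrC.
Qed.

Lemma coordmx_recon N (d : 'rV[L]_N) :
  d = \sum_(t < D) b`_t *: mxL (row t (coordmx d)).
Proof.
apply/matrixP => i j; rewrite summxE.
rewrite [LHS](coord_vbasis (memvf (d i j))).
apply: eq_bigr => t _; rewrite !mxE /= mulr_algr.
by rewrite (ord1 i).
Qed.

Lemma sub_mxL_coord N (d : 'rV[L]_N) (W : 'M[K]_N) :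
  (d <= mxL W)%MS = (coordmx d <= W)%MS.
Proof.
apply/idP/idP.
  by case/submxP => u ->; rewrite coordmx_mulL submxMl.
move=> sW; rewrite [d]coordmx_recon; apply: summx_sub => t _.
apply: scalemx_sub; rewrite map_submx.
exact: submx_trans (row_sub _ _) sW.
Qed.

Lemma wtR_predE N (X : 'M[L]_N) w :
  wtR_pred X w <-> exists W : 'M[K]_N, \rank W = w /\ (X <= mxL W)%MS.
Proof.
rewrite /wtR_pred; split.
  move/asboolP => [W [rW hW]]; exists W; split => //.
  apply/row_subP => i; rewrite sub_mxL_coord; apply: hW; exact: row_sub.
move=> [W [rW hW]]; apply/asboolP; exists W; split => // d hd.
by rewrite /Rsupp -sub_mxL_coord (submx_trans hd hW).
Qed.

Lemma wtR_eq N (X : 'M[L]_N) w0 :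
  (exists W : 'M[K]_N, \rank W = w0 /\ (X <= mxL W)%MS) ->
  (forall W : 'M[K]_N, (X <= mxL W)%MS -> (w0 <= \rank W)%N) ->
  wtR X = w0.
Proof.
move=> ex lb; rewrite /wtR; case: ex_minnP => w hw hmin.
have hw0 : wtR_pred X w0 by apply/wtR_predE.
apply/eqP; rewrite eqn_leq hmin //.
by have [W [<- hW]] := (wtR_predE _ _ _).1 hw; rewrite lb.
Qed.

Lemma Mr_rank N (X : 'M[L]_N) : Mr X (\rank X) = wtR X.
Proof.
rewrite /Mr; case: pselect => [H|H]; last first.
  by exfalso; apply: H; exists (wtR X); apply/asboolP; exists X; split.
case: ex_minnP => w /asboolP [Dm [sD rD <-]] _.
have eqD : (Dm == X)%MS.
  by rewrite /eqmx sD /= -(mxrank_leqif_sup sD).2 rD.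
rewrite /wtR; apply: eq_ex_minn => w'; rewrite /wtR_pred.
apply/asboolP/asboolP => -[W [rW hW]]; exists W; split => // d hd; apply: hW.
  by rewrite (eqmxP eqD).
by rewrite -(eqmxP eqD).
Qed.

Definition cpoly t (G : {poly L}) : {poly K} := \poly_(i < size G) coord b t G`_i.

Lemma coef_cpoly t G k : (cpoly t G)`_k = coord b t G`_k.
Proof.
rewrite coef_poly; case: ltnP => // h.
by rewrite nth_default // linear0.
Qed.

Lemma cpoly_recon (G : {poly L}) :
  G = \sum_(t < D) (b`_t)%:P * polyL (cpoly t G).
Proof.
apply/polyP => k; rewrite coef_sum [LHS](coord_vbasis (memvf G`_k)).
apply: eq_bigr => t _.
by rewrite coefCM coef_map /= coef_cpoly mulr_algr.
Qed.

Lemma cpolyM t (a : {poly K}) (G : {poly L}) :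
  cpoly t (polyL a * G) = a * cpoly t G.
Proof.
apply/polyP => k; rewrite coef_cpoly !coefM linear_sum.
apply: eq_bigr => j _.
by rewrite coef_map /= coef_cpoly mulr_algl linearZ.
Qed.

Lemma horner_mx_wide (R : comNzRingType) p (A : 'M[R]_p.+1) (Q : {poly R}) d :
  (size Q <= d)%N -> horner_mx A Q = \sum_(i < d) Q`_i *: A ^+ i.
Proof.
move=> sQ; rewrite -{1}[Q]coefK poly_def rmorph_sum.
rewrite (big_ord_widen d (fun i => horner_mx A (Q`_i *: 'X^i)) sQ) big_mkcond /=.
apply: eq_bigr => i _; case: ltnP => h.
  rewrite -mul_polyC rmorphM /= horner_mx_C rmorphXn /= horner_mx_X.
  by rewrite -scalemx1 -scalerAl mul1r.
by rewrite nth_default // scale0r.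
Qed.

Lemma coordmx_horner p (BK : 'M[K]_p.+1) (v : 'rV[K]_p.+1) (G : {poly L}) t :
  row t (coordmx (mxL v *m horner_mx (mxL BK) G)) = v *m horner_mx BK (cpoly t G).
Proof.
rewrite (@horner_mx_wide _ _ _ G (size G) (leqnn _)).
rewrite (@horner_mx_wide _ _ BK (cpoly t G) (size G) (size_poly _ _)).
rewrite !mulmx_sumr; apply/rowP => j.
rewrite [RHS]summxE mxE /coordmx mxE summxE linear_sum; apply: eq_bigr => i _.
rewrite -!scalemxAr -mxL_exp -mxL_mul.
have E1 (R : nzRingType) (c : R) (X : 'rV[R]_p.+1) : (c *: X) 0 j = c * X 0 j by rewrite mxE.
have E2 (Y : 'rV[K]_p.+1) : (mxL Y) 0 j = in_alg L (Y 0 j) by rewrite mxE.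
rewrite !E1 E2 /= mulr_algr linearZ /= coef_cpoly.
by rewrite mulrC.
Qed.


End Coord.


Lemma head_filter_iota (P : pred nat) a k l : (a <= l < a + k)%N -> P l ->
  let x := head 0%N [seq j <- iota a k | P j] in [/\ (a <= x)%N, (x <= l)%N & P x].
Proof.
elim: k a => [|k IH] a hl Pl /=; first by lia.
case: ifP => Pa /=; first by split => //; lia.
have hl' : (a.+1 <= l < a.+1 + k)%N.
  case: (eqVneq l a) => [ela|nla]; first by rewrite ela Pa in Pl.
  lia.
have [h1 h2 h3] := IH a.+1 hl' Pl; split => //; lia.
Qed.

Lemma min_in_1m_spec (P : pred nat) m l : (1 <= l <= m)%N -> P l ->
  [/\ (1 <= min_in_1m P m)%N, (min_in_1m P m <= l)%N & P (min_in_1m P m)].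
Proof. move=> hl Pl; apply: (@head_filter_iota P 1 m l _ Pl); lia. Qed.

Lemma min_in_1m_le (P : pred nat) m : (min_in_1m P m <= m)%N.
Proof.
rewrite /min_in_1m; case E: [seq _ <- _ | _] => [|x r] //=.
have : x \in [seq l <- iota 1 m | P l] by rewrite E mem_head.
rewrite mem_filter mem_iota => /andP [_ /andP [h1 h2]]; lia.
Qed.

Section Ell.
Variables (K : fieldType) (L : fieldExtType K).
Variables (gi : {poly L}) (fi : {poly K}) (mi : nat).
Hypotheses (gmon : gi \is monic) (fmon : fi \is monic) (gd : gi %| polyL L fi ^+ mi).
Local Notation F := (polyL L fi).

Lemma FXmon x : F ^+ x \is monic.
Proof. by apply: monic_exp; rewrite map_monic. Qed.

Lemma ell'_le : (ell' gi fi mi <= mi)%N.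
Proof. by rewrite /ell'; case: ifP => // _; apply: min_in_1m_le. Qed.

Lemma ell_le : (ell gi fi mi <= mi)%N.
Proof. by rewrite /ell; case: ifP => // _; apply: min_in_1m_le. Qed.

Lemma ell'_dvd : F ^+ (mi - ell' gi fi mi) %| gi.
Proof.
rewrite /ell'; case: ifP => [/eqP ->|_]; first by rewrite subn0.
have [m0|mpos] := posnP mi; first by rewrite m0 /min_in_1m /= expr0 dvd1p.
have Pm : F ^+ (mi - mi) %| gi by rewrite subnn expr0 dvd1p.
by have [_ _ h] := @min_in_1m_spec (fun l => F ^+ (mi - l) %| gi) mi mi ltac:(lia) Pm.
Qed.

Lemma ell'_max a : (a <= mi)%N -> F ^+ a %| gi -> (a <= mi - ell' gi fi mi)%N.
Proof.
move=> ha hd; rewrite /ell'; case: ifP => [_|hne]; first by rewrite subn0.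
have [aeq|ane] := eqVneq a mi.
  move: hd; rewrite aeq => hd.
  have : F ^+ mi %= gi by rewrite /eqp hd gd.
  by rewrite eqp_monic ?FXmon // eq_sym hne.
have alt : (a < mi)%N by lia.
have [_ h _] := @min_in_1m_spec (fun l => F ^+ (mi - l) %| gi) mi (mi - a) ltac:(lia)
   ltac:(by rewrite /= subKn ?(ltnW alt)).
lia.
Qed.

Lemma ell_dvd : gi %| F ^+ (ell gi fi mi).
Proof.
rewrite /ell; case: ifP => [/eqP ->|ne1]; first by rewrite expr0 dvdpp.
have [m0|mpos] := posnP mi.
  by move: gd; rewrite m0 expr0 dvdp1 size_poly_eq1 eqp_monic ?monic1 // ne1.
by have [_ _ h] := @min_in_1m_spec (fun l => gi %| F ^+ l) mi mi ltac:(lia) gd.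
Qed.

Lemma ell_min a : gi %| F ^+ a -> (ell gi fi mi <= a)%N.
Proof.
move=> hd; rewrite /ell; case: ifP => // ne1.
have [ma|am] := leqP mi a; first exact: leq_trans (min_in_1m_le _ _) ma.
have [a0|apos] := posnP a.
  by move: hd; rewrite a0 expr0 dvdp1 size_poly_eq1 eqp_monic ?monic1 // ne1.
have [_ h _] := @min_in_1m_spec (fun l => gi %| F ^+ l) mi a ltac:(lia) hd.
exact: h.
Qed.

End Ell.

Lemma cop_prod_seq (R : idomainType) (I : eqType) (r : seq I) (X : I -> {poly R}) p :
  (forall i, i \in r -> coprimep p (X i)) -> coprimep p (\prod_(i <- r) X i).
Proof.
elim: r => [|a r IH] h; first by rewrite big_nil coprimep1.
rewrite big_cons coprimepMr h ?mem_head //= IH // => i ir.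
by apply: h; rewrite in_cons ir orbT.
Qed.

Lemma cop_prod (R : idomainType) (I : finType) (P : pred I) (X : I -> {poly R}) p :
  (forall i, P i -> coprimep p (X i)) -> coprimep p (\prod_(i | P i) X i).
Proof.
move=> h; apply: (big_ind (fun q => coprimep p q)) => //.
- exact: coprimep1.
- by move=> x y hx hy; rewrite coprimepMr hx hy.
Qed.

Lemma dvdp_prod_cop (R : idomainType) (I : finType) (X : I -> {poly R}) q :
  (forall i j, i != j -> coprimep (X i) (X j)) -> (forall i, X i %| q) ->
  \prod_i X i %| q.
Proof.
move=> hc hd.
suff : forall r : seq I, uniq r -> \prod_(i <- r) X i %| q.
  by move/(_ (index_enum I)); apply; rewrite index_enum_uniq.
elim => [|a r IH] /=; first by rewrite big_nil dvd1p.
case/andP => ar ur; rewrite big_cons Gauss_dvdp ?hd ?IH //.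
apply: cop_prod_seq => i ir; apply: hc.
by apply: contraNneq ar => ->.
Qed.

Lemma dvdp_prod2 (R : idomainType) (I : finType) (X Y : I -> {poly R}) :
  (forall i, X i %| Y i) -> \prod_i X i %| \prod_i Y i.
Proof.
move=> h; apply: (big_ind2 (fun p q => p %| q)) => //.
by move=> a b c d; apply: dvdp_mul.
Qed.

Lemma deg_prod (R : idomainType) (I : finType) (X : I -> {poly R}) :
  (forall i, X i != 0) ->
  (size (\prod_i X i)).-1 = (\sum_i (size (X i)).-1)%N.
Proof.
move=> h.
suff [] : \prod_i X i != 0 /\ (size (\prod_i X i)).-1 = (\sum_i (size (X i)).-1)%N by [].
apply: (@big_ind2 {poly R} nat (fun p n => p != 0 /\ (size p).-1 = n) 1 *%R 0%N addn).
- by rewrite oner_neq0 size_poly1.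
- move=> p1 n1 p2 n2 [h1 e1] [h2 e2]; split; first by rewrite mulf_neq0.
  rewrite size_mul // -e1 -e2.
  have := size_poly_gt0 p1; have := size_poly_gt0 p2; rewrite h1 h2 /=.
  move: (size p1) (size p2) => x y; lia.
- by move=> i _; split.
Qed.

Lemma mult_decomp (K : fieldType) (F q : {poly K}) : irreducible_poly F -> q != 0 ->
  exists a r, q = F ^+ a * r /\ coprimep F r.
Proof.
move=> Firr; elim: {q}(size q) {-2}q (leqnn (size q)) => [|k IH] q hs qnz.
  by move: hs; rewrite leqn0 size_poly_eq0 (negbTE qnz).
have [Fq|nFq] := boolP (F %| q); last first.
  by exists 0%N, q; rewrite expr0 mul1r irreducible_poly_coprime.
have eqq : q = q %/ F * F by rewrite divpK.
have Fnz : F != 0 by rewrite -size_poly_gt0 (ltn_trans _ Firr.1).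
have q'nz : q %/ F != 0 by apply: contraNneq qnz => h0; rewrite eqq h0 mul0r.
have sq' : (size (q %/ F)%R <= k)%N.
  have := size_mul q'nz Fnz; rewrite -eqq => e.
  have := Firr.1; move: hs e; move: (size q) (size (q %/ F)) (size F) => x y z; lia.
have [a [r [e c]]] := IH _ sq' q'nz.
by exists a.+1, r; split => //; rewrite eqq e exprS -mulrA mulrC mulrA [F * _]mulrC.
Qed.

Section Fact.
Variables (K : fieldType) (L : fieldExtType K) (s : nat).
Variables (f : 'I_s -> {poly K}) (m : 'I_s -> nat) (g : 'I_s -> {poly L}).
Hypotheses (fmon : forall i, f i \is monic) (firr : forall i, irreducible_poly (f i)).
Hypotheses (finj : injective f) (gmon : forall i, g i \is monic).
Hypothesis (gd : forall i, g i %| polyL L (f i) ^+ m i).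
Local Notation FL i := (polyL L (f i)).
Local Notation ftot := (\prod_(i < s) f i ^+ m i).
Local Notation gtot := (\prod_(i < s) g i).
Local Notation e' i := (ell' (g i) (f i) (m i)).
Local Notation e i := (ell (g i) (f i) (m i)).
Local Notation hh := (\prod_(i < s) f i ^+ (m i - e' i)).
Local Notation hh2 := (\prod_(i < s) f i ^+ e i).

Lemma cop_f i j : i != j -> coprimep (f i) (f j).
Proof.
move=> nij; rewrite irreducible_poly_coprime //; apply/negP => hd.
have s1 : size (f i) != 1%N by rewrite neq_ltn (firr i).1 orbT.
have := (firr j).2 (f i) s1 hd; rewrite eqp_monic // => /eqP /finj eij.
by rewrite eij eqxx in nij.
Qed.

Lemma cop_fX i j a b : i != j -> coprimep (f i ^+ a) (f j ^+ b).
Proof. by move=> nij; apply/coprimep_expl/coprimep_expr/cop_f. Qed.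

Lemma cop_FL i j a b : i != j -> coprimep (FL i ^+ a) (FL j ^+ b).
Proof. by move=> nij; rewrite -!rmorphXn coprimep_map cop_fX. Qed.

Lemma cop_FLg i j a : i != j -> coprimep (FL i ^+ a) (g j).
Proof. by move=> nij; exact: (coprimep_dvdl (gd j) (@cop_FL i j a (m j) nij)). Qed.

Lemma g_dvd_tot i : g i %| gtot.
Proof. by rewrite (bigD1 i) //= dvdp_mulr. Qed.

Lemma fm_dvd_tot i : f i ^+ m i %| ftot.
Proof. by rewrite (bigD1 i) //= dvdp_mulr. Qed.

Lemma f_nz i : f i != 0.
Proof. exact: monic_neq0. Qed.

Lemma ftot_nz : ftot != 0.
Proof. by apply: monic_neq0; apply: monic_prod => i _; apply: monic_exp. Qed.

Lemma hh2_dvd q : gtot %| polyL L q -> hh2 %| q.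
Proof.
move=> hg; have [->|qnz] := eqVneq q 0; first exact: dvdp0.
apply: dvdp_prod_cop => [i j nij|i]; first exact: cop_fX.
have [a [r [eq1 cr]]] := @mult_decomp _ _ _ (firr i) qnz.
have gq : g i %| FL i ^+ a * polyL L r.
  by rewrite -rmorphXn -rmorphM -eq1 (dvdp_trans (g_dvd_tot i) hg).
have cg : coprimep (g i) (polyL L r).
  by apply: coprimep_dvdr (gd i) _; apply: coprimep_expl; rewrite coprimep_map.
move: gq; rewrite Gauss_dvdpl // => /(@ell_min _ _ _ _ _ (gmon i) (fmon i) (gd i)) hle.
by rewrite eq1 dvdp_mulr // dvdp_exp2l.
Qed.

Lemma p_dvd_hh p : p %| ftot -> gtot %| gtot -> polyL L p %| gtot -> p %| hh.
Proof.
move=> pf _ pg.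
set r := ftot %/ p.
have er : ftot = r * p by rewrite divpK.
have rnz : r != 0 by apply: contraNneq ftot_nz => h0; rewrite er h0 mul0r.
set H' := \prod_(i < s) f i ^+ e' i.
have H'nz : H' != 0.
  by apply: monic_neq0; apply: monic_prod => i _; apply: monic_exp.
have hr : H' %| r.
  apply: dvdp_prod_cop => [i j nij|i]; first exact: cop_fX.
  have [b [r1 [eq1 cr]]] := @mult_decomp _ _ _ (firr i) rnz.
  have el : (e' i <= m i)%N by apply: ell'_le.
  have [mb|bm] := leqP (m i) b.
    by rewrite eq1 dvdp_mulr // dvdp_exp2l // (leq_trans el mb).
  have h1 : f i ^+ b * f i ^+ (m i - b) %| f i ^+ b * (r1 * p).
    by rewrite -exprD subnKC ?(ltnW bm) // mulrA -eq1 -er fm_dvd_tot.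
  rewrite dvdp_mul2l ?expf_neq0 ?f_nz // in h1.
  rewrite Gauss_dvdpr in h1; last exact: coprimep_expl cr.
  have h2 : FL i ^+ (m i - b) %| gtot.
    by rewrite -rmorphXn (dvdp_trans _ pg) // dvdp_map.
  rewrite (bigD1 i) //= Gauss_dvdpl in h2; last first.
    by apply: cop_prod => j /= ji; apply: cop_FLg; rewrite eq_sym.
  have := @ell'_max _ _ _ _ _ (gmon i) (fmon i) (gd i) _ (leq_subr _ _) h2.
  move=> hle; rewrite eq1 dvdp_mulr // dvdp_exp2l //; lia.
have [r' er'] : exists r', r = r' * H' by exists (r %/ H'); rewrite divpK.
have eH : hh * H' = ftot.
  rewrite -big_split /=; apply: eq_bigr => i _; rewrite -exprD subnK //.
  exact: ell'_le.
have : hh * H' = (r' * p) * H' by rewrite eH er er' mulrAC.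
by move/(mulIf H'nz) ->; apply: dvdp_mull; apply: dvdpp.
Qed.

Lemma hh_dvd_f : hh %| ftot.
Proof. by apply: dvdp_prod2 => i; apply: dvdp_exp2l; apply: leq_subr. Qed.

Lemma hh2_dvd_f : hh2 %| ftot.
Proof. by apply: dvdp_prod2 => i; apply: dvdp_exp2l; apply: ell_le. Qed.

Lemma hhL_dvd : polyL L hh %| gtot.
Proof.
rewrite /polyL rmorph_prod; apply: dvdp_prod2 => i; rewrite rmorphXn.
exact: ell'_dvd.
Qed.

Lemma hh2L_dvd : gtot %| polyL L hh2.
Proof.
rewrite /polyL rmorph_prod; apply: dvdp_prod2 => i; rewrite rmorphXn.
exact: ell_dvd.
Qed.

Lemma deg_ftot : (size ftot).-1 = (\sum_(i < s) (size (f i)).-1 * m i)%N.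
Proof.
rewrite deg_prod => [|i]; last by rewrite expf_neq0 ?f_nz.
by apply: eq_bigr => i _; rewrite size_exp.
Qed.

Lemma deg_hh : (size hh).-1 = (\sum_(i < s) (size (f i)).-1 * (m i - e' i))%N.
Proof.
rewrite deg_prod => [|i]; last by rewrite expf_neq0 ?f_nz.
by apply: eq_bigr => i _; rewrite size_exp.
Qed.

Lemma deg_hh2 : (size hh2).-1 = (\sum_(i < s) (size (f i)).-1 * e i)%N.
Proof.
rewrite deg_prod => [|i]; last by rewrite expf_neq0 ?f_nz.
by apply: eq_bigr => i _; rewrite size_exp.
Qed.

End Fact.


Theorem theorem4 (K : fieldType) (L : fieldExtType K) (n : nat)
    (M : 'M[K]_n.+1) (s : nat) (f : 'I_s -> {poly K}) (m : 'I_s -> nat)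
    (C : 'M[L]_n.+1) (g : 'I_s -> {poly L}) :
  (n.+1 <= \dim {:L})%N ->
  cyclic_mx M ->
  (forall i, f i \is monic) ->
  (forall i, irreducible_poly (f i)) ->
  injective f ->
  (forall i, 0 < m i)%N ->
  mxminpoly M = \prod_(i < s) f i ^+ m i ->
  (C *m (mxL L M)^T <= C)%MS ->
  (forall i, g i \is monic) ->
  (forall i, g i %| polyL L (f i) ^+ m i) ->
  (C :=: (horner_mx (mxL L M) (\prod_(i < s) g i))^T)%MS ->
  let k := \rank C in
  ((0 < k)%N ->
     Mr C k = (\sum_(i < s) ell' (g i) (f i) (m i) * (size (f i)).-1)%N /\
     Mr C k = (\sum_(i < s | g i != polyL L (f i) ^+ m i)
                 ell' (g i) (f i) (m i) * (size (f i)).-1)%N) /\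
  ((k < n.+1)%N ->
     Mr (dualC C) (n.+1 - k) = (\sum_(i < s) ell (g i) (f i) (m i) * (size (f i)).-1)%N /\
     Mr (dualC C) (n.+1 - k) =
       (\sum_(i < s | ~~ coprimep (\prod_(j < s) g j) (polyL L (f i)))
          ell (g i) (f i) (m i) * (size (f i)).-1)%N).
Proof.
move=> _ [v cyc] fmon firr finj _ fmin _ gmon gd Ceq k.
set gtot := \prod_(i < s) g i.
set BK := M^T.
set BL := map_mx (in_alg L) BK.
set vL := map_mx (in_alg L) v.
set phiK := mxminpoly M.
have Ceq' : (C :=: horner_mx BL gtot)%MS.
  by rewrite /BL -map_trmx -horner_trmx.
have hK : horner_mx BK phiK = 0 by rewrite -horner_trmx mx_root_minpoly trmx0.
have phinz : phiK != 0 by apply: monic_neq0; apply: mxminpoly_monic.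
have sphi : size phiK = n.+2.
  apply/eqP; rewrite eqn_leq; apply/andP; split.
    have hc : char_poly M != 0 by rewrite -size_poly_gt0 size_char_poly.
    by have := dvdp_leq hc (mxminpoly_dvd_char M); rewrite size_char_poly.
  rewrite ltnNge; apply/negP => hs.
  have := @cyc_inj _ _ _ _ cyc _ hs; rewrite hK mulmx0 => /(_ erefl) h0.
  by rewrite h0 eqxx in phinz.
have cycL : row_free (\matrix_(i < n.+1) (vL *m BL ^+ i)).
  have -> : \matrix_(i < n.+1) (vL *m BL ^+ i) =
            map_mx (in_alg L) (\matrix_(i < n.+1) (v *m BK ^+ i)).
    by apply/row_matrixP => i; rewrite rowK -map_row rowK mxL_mul mxL_exp.
  by rewrite row_free_map.
set phiL := polyL L phiK.
have hL : horner_mx BL phiL = 0 by rewrite /BL -map_horner_mx hK map_mx0.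
have sphiL : size phiL = n.+2 by rewrite size_map_poly.
have gphi : gtot %| phiL.
  rewrite /phiL /phiK fmin /polyL rmorph_prod; apply: dvdp_prod2 => i.
  by rewrite rmorphXn; apply: gd.
have ftot_eq : phiK = \prod_(i < s) f i ^+ m i by rewrite /phiK fmin.
set hh := \prod_(i < s) f i ^+ (m i - ell' (g i) (f i) (m i)).
set hh2 := \prod_(i < s) f i ^+ ell (g i) (f i) (m i).
have hhf : hh %| phiK by rewrite ftot_eq; apply: hh_dvd_f.
have hh2f : hh2 %| phiK by rewrite ftot_eq; apply: hh2_dvd_f.
have rk_hh : \rank (horner_mx BK hh) = (n.+2 - size hh)%N
  := @rank_horner _ _ _ _ cyc _ _ hK sphi hhf.
have rk_hh2 : \rank (horner_mx BK hh2) = (n.+2 - size hh2)%N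
  := @rank_horner _ _ _ _ cyc _ _ hK sphi hh2f.
have hhnz : hh != 0 by apply: monic_neq0; apply: monic_prod => i _; apply: monic_exp.
have hh2nz : hh2 != 0 by apply: monic_neq0; apply: monic_prod => i _; apply: monic_exp.
have shh : (0 < size hh <= n.+2)%N.
  by rewrite size_poly_gt0 hhnz -sphi dvdp_leq.
have shh2 : (0 < size hh2 <= n.+2)%N.
  by rewrite size_poly_gt0 hh2nz -sphi dvdp_leq.
have W1 : wtR C = (n.+2 - size hh)%N.
  apply: wtR_eq.
    exists (horner_mx BK hh); split => //.
    rewrite Ceq' map_horner_mx -/BL /gtot.
    have /dvdpP [q ->] := @hhL_dvd _ _ _ _ _ _ fmon gmon gd.
    by rewrite rmorphM /= -mulmxE submxMl.
  move=> W CW; rewrite -rk_hh; apply: mxrankS.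
  pose I := fun q : {poly K} => forall r : {poly K}, (v *m horner_mx BK (r * q) <= W)%MS.
  have Idvd a b : I a -> a %| b -> I b.
    by move=> Ia /dvdpP [c ->] r; rewrite mulrA; apply: Ia.
  have Iadd a b : I a -> I b -> I (a + b).
    move=> Ia Ib r; rewrite mulrDr rmorphD mulmxDr; apply: addmx_sub; [exact: Ia | exact: Ib].
  have Iphi : I phiK by move=> r; rewrite rmorphM /= hK mulr0 mulmx0 sub0mx.
  have Ig t : I (cpoly K L t gtot).
    move=> r; rewrite -cpolyM -coordmx_horner.
    apply: submx_trans (row_sub t _) _; rewrite -sub_mxL_coord.
    rewrite rmorphM /= -mulmxE mulmxA; apply: submx_trans (submxMl _ _) _.
    by rewrite -Ceq'.
  have Igcd a b : I a -> I b -> I (gcdp a b).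
    move=> Ia Ib; have [u hu] := Bezoutp a b.
    apply: (Idvd (u.1 * a + u.2 * b)); last by case/andP: hu.
    by apply: Iadd; [apply: Idvd Ia _ | apply: Idvd Ib _]; apply: dvdp_mull.
  have fold (l : seq {poly K}) : (forall x, x \in l -> I x) ->
      [/\ I (foldr (@gcdp K) phiK l), foldr (@gcdp K) phiK l %| phiK &
        forall x, x \in l -> foldr (@gcdp K) phiK l %| x].
    elim: l => [|a l IH] hl /=; first by split => //; rewrite dvdpp.
    have [h1 h2 h3] : _ := IH (fun x xl => hl x ltac:(by rewrite in_cons xl orbT)).
    split; first by apply: Igcd => //; apply: hl; rewrite mem_head.
      exact: dvdp_trans (dvdp_gcdr _ _) h2.
    move=> x; rewrite in_cons => /orP [/eqP ->|xl]; first exact: dvdp_gcdl.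
    exact: dvdp_trans (dvdp_gcdr _ _) (h3 x xl).
  set lst := [seq cpoly K L t gtot | t <- enum 'I_(\dim {:L})].
  have [Ip pphi pdv] := fold lst (fun x => fun hx => ltac:(case/mapP: hx => t _ ->; exact: Ig)).
  set p := foldr (@gcdp K) phiK lst in Ip pphi pdv.
  have pL : polyL L p %| gtot.
    rewrite [X in _ %| X](cpoly_recon K L gtot).
    apply: (big_ind (fun q => polyL L p %| q)) => [|a b|t _]; first by rewrite dvdp0.
      by apply: dvdp_add.
    apply: dvdp_mull; rewrite dvdp_map; apply: pdv.
    by apply: map_f; rewrite mem_enum.
  have phh : p %| hh.
    by apply: (@p_dvd_hh _ _ _ _ _ _ fmon firr finj gmon gd) => //; rewrite -ftot_eq.
  have Ihh := Idvd _ _ Ip phh.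
  apply/row_subP => i; rewrite -[horner_mx BK hh]mul1mx row_mul.
  have [Q _ ->] := @cyc_surj _ _ _ _ cyc (row i 1%:M).
  by rewrite -mulmxA mulmxE -rmorphM; apply: Ihh.
have W2 : wtR (dualC C) = (size hh2).-1.
  apply: wtR_eq.
    exists (kermx (horner_mx BK hh2)^T); split.
      rewrite mxrank_ker mxrank_tr rk_hh2; move: shh2; move: (size hh2) => x; lia.
    rewrite /dualC map_kermx -map_trmx map_horner_mx -/BL; apply: perpS; rewrite Ceq' /gtot.
    have /dvdpP [q hq] := @hh2L_dvd _ _ _ _ _ _ fmon gmon gd.
    have hq' : map_poly (in_alg L) hh2 = q * \prod_(i < s) g i := hq.
    by rewrite hq' rmorphM /= -mulmxE submxMl.
  move=> W CW; set U := kermx W^T.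
  have UL : (map_mx (in_alg L) U <= C)%MS.
    rewrite map_kermx -map_trmx; apply: submx_trans _ (@perpK _ _ _ C).
    exact: perpS.
  have Usub : (U <= horner_mx BK hh2)%MS.
    apply/row_subP => i; have [q _ eq] := @cyc_surj _ _ _ _ cyc (row i U).
    have : gtot %| polyL L q.
      apply: (@cyc_mem_dvd _ _ _ _ cycL phiL) => //; rewrite -Ceq'.
      have : (map_mx (in_alg L) (row i U) <= C)%MS.
        by rewrite (submx_trans _ UL) // map_submx row_sub.
      by rewrite eq map_mxM map_horner_mx.
    move/(@hh2_dvd _ _ _ _ _ _ fmon firr finj gmon gd)/dvdpP => [c hc].
    by rewrite eq hc rmorphM /= -mulmxE mulmxA submxMl.
  have := mxrankS Usub; rewrite mxrank_ker mxrank_tr rk_hh2.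
  have := rank_leq_row W; move: shh2; move: (size hh2) (\rank W) => x y; lia.
have dF := @deg_ftot _ _ f m fmon.
have dH := @deg_hh _ _ _ f m g fmon.
have dH2 := @deg_hh2 _ _ _ f m g fmon.
rewrite -ftot_eq sphi /= in dF.
have sumE : (\sum_(i < s) (size (f i)).-1 * m i =
    \sum_(i < s) (size (f i)).-1 * (m i - ell' (g i) (f i) (m i)) +
    \sum_(i < s) ell' (g i) (f i) (m i) * (size (f i)).-1)%N.
  rewrite -big_split /=; apply: eq_bigr => i _.
  have h := @ell'_le _ _ (g i) (f i) (m i).
  rewrite (mulnC (ell' _ _ _)) -mulnDr subnK //.
have sum1 : (n.+2 - size hh)%N = (\sum_(i < s) ell' (g i) (f i) (m i) * (size (f i)).-1)%N.
  rewrite -dH in sumE; rewrite -dF in sumE.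
  rewrite -/hh in sumE; move: sumE shh; move: (size hh) => a; lia.
rewrite -/hh2 in dH2.
split => _.
  have E : Mr C k = (\sum_(i < s) ell' (g i) (f i) (m i) * (size (f i)).-1)%N.
    by rewrite /k Mr_rank W1 sum1.
  split => //; rewrite E [RHS]big_rmcond //= => i; rewrite negbK => /eqP he.
  by rewrite /ell' he eqxx.
have rd : \rank (dualC C) = (n.+1 - k)%N by rewrite mxrank_ker mxrank_tr.
have E : Mr (dualC C) (n.+1 - k) =
    (\sum_(i < s) ell (g i) (f i) (m i) * (size (f i)).-1)%N.
  rewrite -rd Mr_rank W2 dH2; apply: eq_bigr => i _; exact: mulnC.
split => //; rewrite E [RHS]big_rmcond //= => i; rewrite negbK => hc.
have c1 : coprimep (g i) (polyL L (f i)) by apply: coprimep_dvdr (@g_dvd_tot _ _ _ g i) hc.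
have c2 : coprimep (g i) (g i).
  by apply: coprimep_dvdl (gd i) _; apply: coprimep_expr.
move: c2; rewrite coprimepp size_poly_eq1 eqp_monic ?monic1 // => /eqP ->.
by rewrite /ell eqxx.
Qed.
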